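(* Fix $b\in\mathbb{N}$ and let $\Lambda:\mathbb{N}\times\mathbb{N}\to\mathbb{C}$ be a bounded function such that for each $k\in\mathbb{N}$ the limit \[ M_{b,k}(\Lambda)=\lim_{N\to\infty}\frac{\sum_{(r,s)\in T_{N,b,k}}\Lambda(r,s)}{|T_{N,b,k}|} \] exists, where $T_{N,b,k}=\{(r,s): 0<r,s\le N,\ \gcd_b(r,s)=k\}$. Let $\zeta_{\Lambda,b}(s)=\sum_{k=1}^\infty M_{b,k}(\Lambda)k^{-s}$. Then $\zeta_{\Lambda,b}(s)$ converges at $s=b+1$, the mean value $M(\Lambda)$ exists, and \[ M(\Lambda)=\frac{\zeta_{\Lambda,b}(b+1)}{\zeta(b+1)}, \] where $\zeta$ is the Riemann zeta function.
   Context: For $r,s\in\mathbb{N}$, $\gcd_b(r,s)=\max\{k\in\mathbb{N} : k\mid r \text{ and } k^b\mid s\}$. For $N\in\mathbb{N}$ let $T_N=\{(r,s): 0<r,s\le N\}$; the mean value of $\Lambda$ is $M(\Lambda)=\lim_{N\to\infty}\frac{1}{N^2}\sum_{(r,s)\in T_N}\Lambda(r,s)$. *)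

(* Defs.v *)
From Stdlib Require Import Reals Arith List.
From Coquelicot Require Import Coquelicot.
Import ListNotations.
Open Scope R_scope.

(* gcd_b(r,s) = max { k in N : k | r and k^b | s }.  For r > 0 every such k
   satisfies 1 <= k <= r, and k = 1 always qualifies. *)
Definition gcdb (b r s : nat) : nat :=
  fold_right Nat.max 0%nat
    (filter (fun k => (Nat.eqb (r mod k) 0 && Nat.eqb (s mod (k ^ b)) 0)%bool)
            (seq 1 r)).

Definition TN (N : nat) : list (nat * nat) := list_prod (seq 1 N) (seq 1 N).

Definition TNbk (N b k : nat) : list (nat * nat) :=
  filter (fun p => Nat.eqb (gcdb b (fst p) (snd p)) k) (TN N).

Definition sumC (L : nat -> nat -> C) (l : list (nat * nat)) : C :=
  fold_right Cplus (RtoC 0) (map (fun p => L (fst p) (snd p)) l).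

Definition avg_bk (L : nat -> nat -> C) (b k N : nat) : C :=
  Cdiv (sumC L (TNbk N b k)) (RtoC (INR (length (TNbk N b k)))).

Definition mean_N (L : nat -> nat -> C) (N : nat) : C :=
  Cdiv (sumC L (TN N)) (RtoC (INR N ^ 2)).

Definition zeta_nat (s : nat) : R := Series (fun n => / (INR (S n)) ^ s).

(* Main.v *)
Require Import Defs.
From Stdlib Require Import Reals Arith List.
From Coquelicot Require Import Coquelicot.
Open Scope R_scope.

From Stdlib Require Import Lia Lra.
From HB Require Import structures.
From mathcomp Require ssreflect ssrfun ssrbool eqtype ssrnat seq div prime bigop.
From mathcomp Require zify.

Module Aux.
Import mathcomp.boot.ssreflect mathcomp.boot.ssrfun mathcomp.boot.ssrbool mathcomp.boot.eqtype
  mathcomp.boot.ssrnat mathcomp.boot.seq mathcomp.boot.div mathcomp.boot.prime mathcomp.boot.bigop.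
Import mathcomp.zify.zify.
Open Scope nat_scope.

Lemma powE m n : Nat.pow m n = expn m n.
Proof. elim: n => //= n IH; by rewrite expnS IH. Qed.

Lemma eqbE x y : Nat.eqb x y = (x == y).
Proof. case: (Nat.eqb_spec x y) => [->|h]; first by rewrite eqxx. by apply/esym/eqP. Qed.

Lemma modE r k : 0 < k -> Nat.eqb (r mod k) 0 = (k %| r).
Proof.
move=> hk. case h: (k %| r).
- move/dvdnP: h => [q ->]. apply/Nat.eqb_eq. apply: Nat.mod_mul. lia.
- apply/Nat.eqb_neq => hm. move/Nat.mod_divide: hm => hm.
  have : k <> 0%nat by lia.
  move=> /hm [z hz]. move: h. have -> : k %| r by apply/dvdnP; exists z.
  by [].
Qed.

Definition Pb b r s j := (j %| r) && (j ^ b %| s).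

Lemma fold_max_ge l x : List.In x l -> (x <= fold_right Nat.max 0 l)%coq_nat.
Proof. elim: l => //= y l IH [<-|h]; [lia | move: (IH h); lia]. Qed.

Lemma fold_max_in l : l <> nil -> List.In (fold_right Nat.max 0 l) l.
Proof.
elim: l => //= y l IH _. case: l IH => [|z l] IH /=; first by left; lia.
have /IH h : z :: l <> nil by [].
set M := fold_right _ _ _ in h *.
case: (Nat.max_spec y M) => [[_ ->]|[_ ->]]; [by right | by left].
Qed.

Lemma filt_iff b r s j : 0 < j ->
  (Nat.eqb (r mod j) 0 && Nat.eqb (s mod (Nat.pow j b)) 0)%bool = Pb b r s j.
Proof.
move=> hj. rewrite /Pb modE // powE modE //. by rewrite expn_gt0 hj.
Qed.

Lemma gcdb_spec b r s : 0 < r ->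
  [/\ 0 < gcdb b r s, gcdb b r s <= r, Pb b r s (gcdb b r s)
    & forall j, 0 < j -> Pb b r s j -> j <= gcdb b r s].
Proof.
move=> hr. rewrite /gcdb.
set f := (fun k => _).
have hin : forall j, List.In j (List.filter f (List.seq 1 r)) <-> (0 < j /\ j <= r /\ Pb b r s j).
  move=> j. rewrite filter_In in_seq. split.
  - move=> [h1 h2]. have hj : 0 < j by apply/ltP; lia.
    rewrite /f filt_iff // in h2. split=> //. split=> //. apply/leP; lia.
  - move=> [h1 [h2 h3]]. split; first by move/ltP: h1; move/leP: h2; lia.
    by rewrite /f filt_iff.
have ne : List.filter f (List.seq 1 r) <> nil.
  move=> e. have : List.In 1 (List.filter f (List.seq 1 r)).
    apply/hin. split=> //; split=> //. by rewrite /Pb !dvd1n exp1n dvd1n.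
  by rewrite e.
move: (fold_max_in _ ne) => /hin [h1 [h2 h3]].
split=> // j hj hP. apply/leP. apply: fold_max_ge. apply/hin. split=> //. split=> //.
by apply: dvdn_leq => //; case/andP: hP.
Qed.

Lemma lcm_pow a c b s : 0 < a -> 0 < c -> a ^ b %| s -> c ^ b %| s -> lcmn a c ^ b %| s.
Proof.
move=> ha hc h1 h2.
set g := gcdn a c.
have hg : 0 < g by rewrite gcdn_gt0 ha.
set a' := a %/ g. set c' := c %/ g.
have ea : a = a' * g by rewrite divnK // dvdn_gcdl.
have ec : c = c' * g by rewrite divnK // dvdn_gcdr.
have cop : coprime a' c'.
  rewrite /coprime. apply/eqP.
  have : gcdn a' c' * g = g by rewrite muln_gcdl -ea -ec.
  move=> e. apply/eqP. rewrite -(eqn_pmul2r hg) e mul1n. done.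
have el : lcmn a c = a' * c' * g.
  apply/eqP. rewrite -(eqn_pmul2r hg) muln_lcm_gcd -/g.
  apply/eqP. rewrite {1}ea {1}ec. by rewrite mulnA (mulnAC a').
rewrite el.
have hgs : g ^ b %| s. apply: dvdn_trans h1. rewrite ea expnMn. by apply: dvdn_mull.
move: h1 h2. rewrite ea ec !expnMn.
rewrite -(divnK hgs). set u := s %/ g ^ b.
have hgb : 0 < g ^ b by rewrite expn_gt0 hg.
rewrite !dvdn_pmul2r // => h1 h2.
rewrite Gauss_dvd //. by rewrite h1 h2.
by apply: coprimeXl; apply: coprimeXr.
Qed.

Lemma gcdb_dvd b r s j : 0 < r -> 0 < j -> (j %| gcdb b r s) = Pb b r s j.
Proof.
move=> hr hj. case: (gcdb_spec b r s hr) => hg0 hgr /andP[hg1 hg2] hmax.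
apply/idP/idP.
- move=> hd. rewrite /Pb. rewrite (dvdn_trans hd hg1) /=.
  apply: dvdn_trans hg2. by apply: dvdn_exp2r.
- move=> /andP[h1 h2].
  set l := lcmn j (gcdb b r s).
  have hl0 : 0 < l by rewrite lcmn_gt0 hj.
  have hPl : Pb b r s l.
    rewrite /Pb dvdn_lcm h1 hg1 /=. by apply: lcm_pow.
  have hle := hmax l hl0 hPl.
  have hge : gcdb b r s <= l by apply: dvdn_leq => //; apply: dvdn_lcmr.
  have -> : gcdb b r s = l by apply/anti_leq; rewrite hle hge.
  by apply: dvdn_lcml.
Qed.

Lemma Rplus_assoc' : associative Rplus. Proof. move=> *; ring. Qed.
HB.instance Definition _ := Monoid.isComLaw.Build R 0%R Rplus Rplus_assoc' Rplus_comm Rplus_0_l.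
HB.instance Definition _ := Monoid.isMulLaw.Build R 0%R Rmult Rmult_0_l Rmult_0_r.
HB.instance Definition _ := Monoid.isAddLaw.Build R Rmult Rplus Rmult_plus_distr_r Rmult_plus_distr_l.

Fixpoint mu_aux (f n : nat) : R :=
  match f with
  | 0 => 0%R
  | S f' => if n == 1 then 1%R else if n <= 1 then 0%R
            else if pdiv n * pdiv n %| n then 0%R else (- mu_aux f' (n %/ pdiv n))%R
  end.
Definition mu n := mu_aux n n.

Lemma mu_aux_stable f1 f2 n : n <= f1 -> n <= f2 -> mu_aux f1 n = mu_aux f2 n.
Proof.
elim: f1 f2 n => [|f1 IH] [|f2] n /= h1 h2; try (have -> : n = 0 by lia); try done.
case: ifP => // _. case: ifP => // hn. case: ifP => // _. congr (- _)%R.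
have hn2 : 1 < n by rewrite ltnNge hn.
have hp : 1 < pdiv n by apply: prime_gt1; apply: pdiv_prime.
have : n %/ pdiv n < n by apply: ltn_Pdiv => //; lia.
move=> hlt. apply: IH; lia.
Qed.

Lemma muE n : 1 < n -> mu n = if pdiv n * pdiv n %| n then 0%R else (- mu (n %/ pdiv n))%R.
Proof.
move=> hn. rewrite /mu. case: n hn => [|n] //= hn.
have -> : (n.+1 == 1) = false by apply/eqP; lia.
have -> : (n.+1 <= 1) = false by lia.
case: ifP => // _. congr (- _)%R.
have hp : 1 < pdiv n.+1 by apply: prime_gt1; apply: pdiv_prime.
have : n.+1 %/ pdiv n.+1 < n.+1 by apply: ltn_Pdiv => //; lia.
move=> hlt. apply: mu_aux_stable; lia.
Qed.

Lemma mu1 : mu 1 = 1%R. Proof. by []. Qed.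

Lemma mu_aux_bound f n : (Rabs (mu_aux f n) <= 1)%R.
Proof.
elim: f n => [|f IH] n /=; first by rewrite Rabs_R0; lra.
case: ifP => _; first by rewrite Rabs_R1; lra.
case: ifP => _; first by rewrite Rabs_R0; lra.
case: ifP => _; first by rewrite Rabs_R0; lra.
by rewrite Rabs_Ropp.
Qed.

Lemma mu_bound n : (Rabs (mu n) <= 1)%R.
Proof. exact: mu_aux_bound. Qed.

Lemma pdiv_of_div m d : 1 < m -> d %| m -> pdiv m %| d -> pdiv d = pdiv m.
Proof.
move=> hm hd hpd.
have hp : 1 < pdiv m by apply: prime_gt1; apply: pdiv_prime.
have hd0 : 0 < d by apply: dvdn_gt0 hd; lia.
have hd1 : 1 < d. have := dvdn_leq hd0 hpd. lia.
apply/anti_leq. rewrite pdiv_min_dvd //=.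
apply: pdiv_min_dvd. by apply: prime_gt1; apply: pdiv_prime.
by apply: dvdn_trans (pdiv_dvd d) hd.
Qed.

Arguments pdiv_of_div {m d}.

Lemma mu_zero_sq m d : 1 < m -> d %| m -> pdiv m * pdiv m %| d -> mu d = 0%R.
Proof.
move=> hm hd hpp.
have hpd : pdiv m %| d by apply: dvdn_trans hpp; apply: dvdn_mulr.
have hp : 1 < pdiv m by apply: prime_gt1; apply: pdiv_prime.
have hd0 : 0 < d by apply: dvdn_gt0 hd; lia.
have hd1 : 1 < d. have := dvdn_leq hd0 hpd. lia.
rewrite muE // (pdiv_of_div hm hd hpd) hpp. done.
Qed.

Lemma mu_mul_p m e : 1 < m -> e %| m -> ~~ (pdiv m %| e) -> mu (pdiv m * e) = (- mu e)%R.
Proof.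
move=> hm he hpe.
set p := pdiv m.
have pp : prime p by apply: pdiv_prime.
have hp : 1 < p by apply: prime_gt1.
have he0 : 0 < e by apply: dvdn_gt0 he; lia.
have hpem : p * e %| m.
  rewrite Gauss_dvd; last by rewrite prime_coprime.
  by rewrite pdiv_dvd he.
have hpd : p %| p * e by apply: dvdn_mulr.
have h1 : 1 < p * e by nia.
rewrite muE // (pdiv_of_div hm hpem hpd) -/p.
rewrite dvdn_pmul2l; last by lia.
rewrite (negbTE hpe) mulKn //. lia.
Qed.

Lemma rsum_opp (I : Type) (r : seq I) (P : pred I) (F : I -> R) :
  \big[Rplus/0%R]_(i <- r | P i) (- F i)%R = (- \big[Rplus/0%R]_(i <- r | P i) F i)%R.
Proof.
elim: r => [|x r IH]; rewrite ?big_nil ?big_cons; first lra.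
case: (P x); rewrite IH; lra.
Qed.

Lemma mobius_div m : 0 < m ->
  \big[Rplus/0%R]_(d <- divisors m) mu d = if m == 1 then 1%R else 0%R.
Proof.
move=> hm0. case: (ltngtP m 1) => hm; first lia.
2: by rewrite hm /= big_cons big_nil mu1; lra.
set p := pdiv m.
have pp : prime p by apply: pdiv_prime.
have hp : 1 < p by apply: prime_gt1.
rewrite (bigID (fun d => p %| d)) /=.
rewrite (bigID (fun d => p * p %| d)) /=.
rewrite [X in (X + _ + _)%R]big1_seq; last first.
  move=> d /andP[/andP[_ h] hd]. apply: (@mu_zero_sq m d hm _ h). by rewrite dvdn_divisors.
rewrite Rplus_0_l.
rewrite -big_filter.
set D := divisors m.
have hperm : perm_eq [seq d <- D | (p %| d) && ~~ (p * p %| d)]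
                     [seq p * e | e <- [seq e <- D | ~~ (p %| e)]].
  apply: uniq_perm.
  - by apply: filter_uniq; apply: divisors_uniq.
  - rewrite map_inj_uniq; first by apply: filter_uniq; apply: divisors_uniq.
    move=> x y /eqP. rewrite eqn_pmul2l; [by move/eqP | lia].
  - move=> x. rewrite mem_filter. apply/idP/idP.
    + move=> /andP[/andP[hx1 hx2] hx3]. apply/mapP. exists (x %/ p).
      * rewrite mem_filter. rewrite /D -dvdn_divisors // in hx3.
        apply/andP; split.
        - apply/negP => h. move/negP: hx2; apply. rewrite -(divnK hx1) mulnC.
          by rewrite dvdn_pmul2l; lia.
        - rewrite -dvdn_divisors //. apply: dvdn_trans hx3. by apply: dvdn_div.
      * by rewrite mulnC divnK.
    + move=> /mapP[e]. rewrite mem_filter => /andP[he1 he2] ->.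
      rewrite /D -dvdn_divisors // in he2.
      have hpem : p * e %| m.
        rewrite Gauss_dvd; last by rewrite prime_coprime.
        by rewrite pdiv_dvd he2.
      rewrite dvdn_mulr //= dvdn_pmul2l; last lia.
      by rewrite he1 /D -dvdn_divisors.
rewrite (perm_big _ hperm) /= big_map big_filter.
have key : \big[Rplus/0%R]_(i <- D | ~~ (p %| i)) mu (p * i)
   = (- \big[Rplus/0%R]_(i <- D | ~~ (p %| i)) mu i)%R.
  rewrite -rsum_opp big_seq_cond [in RHS]big_seq_cond.
  apply: eq_bigr => e /andP[he1 he2]. rewrite /D -dvdn_divisors // in he1.
  by apply: mu_mul_p.
rewrite key; lra.
Qed.


Lemma mobius_range m M : 0 < m -> m <= M ->
  \big[Rplus/0%R]_(d <- iota 1 M) (mu d * (if d %| m then 1 else 0))%R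
  = if m == 1 then 1%R else 0%R.
Proof.
move=> hm hmM.
rewrite (eq_bigr (fun d => if d %| m then mu d else 0%R)); last first.
  move=> d _. case: ifP => _; lra.
rewrite -big_mkcond -big_filter -(mobius_div m hm).
apply: perm_big. apply: uniq_perm.
- by apply: filter_uniq; apply: iota_uniq.
- by apply: divisors_uniq.
- move=> d. rewrite mem_filter mem_iota -dvdn_divisors //.
  case h: (d %| m) => //=.
  have := dvdn_leq hm h. have := dvdn_gt0 hm h. lia.
Qed.

Lemma len_filter (T : Type) (f : T -> bool) l :
  INR (length (List.filter f l)) = \big[Rplus/0%R]_(x <- l) (if f x then 1 else 0)%R.
Proof.
elim: l => [|x l IH]; first by rewrite big_nil.
have -> : List.filter f (x :: l) = if f x then x :: List.filter f l else List.filter f l by [].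
rewrite big_cons. case: (f x).
- rewrite [length (_ :: _)]/= S_INR IH; lra.
- rewrite IH; lra.
Qed.

Lemma sum_app (T : Type) (a c : list T) (F : T -> R) :
  \big[Rplus/0%R]_(i <- List.app a c) F i
  = (\big[Rplus/0%R]_(i <- a) F i + \big[Rplus/0%R]_(i <- c) F i)%R.
Proof. elim: a => [|x a IH] /=; rewrite ?big_nil ?big_cons ?IH; lra. Qed.

Lemma sum_lmap (T U : Type) (f : T -> U) (l : list T) (F : U -> R) :
  \big[Rplus/0%R]_(i <- List.map f l) F i = \big[Rplus/0%R]_(x <- l) F (f x).
Proof. elim: l => [|x l IH] /=; rewrite ?big_nil ?big_cons ?IH //. Qed.

Lemma sum_prod (F : nat * nat -> R) l1 l2 :
  \big[Rplus/0%R]_(p <- list_prod l1 l2) F p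
  = \big[Rplus/0%R]_(x <- l1) \big[Rplus/0%R]_(y <- l2) F (x, y).
Proof.
elim: l1 => [|x l IH]; first by rewrite /= !big_nil.
by rewrite sum_app sum_lmap IH big_cons.
Qed.

Lemma seqE m n : List.seq m n = iota m n.
Proof. by elim: n m => //= n IH m; rewrite IH. Qed.

Lemma sum_mult j N : 0 < j ->
  \big[Rplus/0%R]_(x <- iota 1 N) (if j %| x then 1 else 0)%R = INR (N %/ j).
Proof.
move=> hj. elim: N => [|N IH]; first by rewrite big_nil div0n.
rewrite (_ : iota 1 N.+1 = iota 1 N ++ [:: N.+1]); last by rewrite -(addn1 N) iotaD add1n addn1.
rewrite big_cat big_seq1 IH divnS // plus_INR.
case: (j %| N.+1) => /=; lra.
Qed.

Lemma rsum_le (I : eqType) (r : seq I) (F G : I -> R) :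
  (forall i, i \in r -> (F i <= G i)%R) ->
  (\big[Rplus/0%R]_(i <- r) F i <= \big[Rplus/0%R]_(i <- r) G i)%R.
Proof.
elim: r => [|x r IH] h; rewrite ?big_nil ?big_cons; first lra.
apply: Rplus_le_compat. apply: h; by rewrite inE eqxx.
apply: IH => i hi; apply: h; by rewrite inE hi orbT.
Qed.

Definition cnt b k N := length (TNbk N b k).

Lemma cnt_sum b k N : INR (cnt b k N) =
  \big[Rplus/0%R]_(x <- iota 1 N) \big[Rplus/0%R]_(y <- iota 1 N)
     (if gcdb b x y == k then 1 else 0)%R.
Proof.
rewrite /cnt /TNbk len_filter /TN sum_prod !seqE.
apply: eq_bigr => x _; apply: eq_bigr => y _ /=. case: (Nat.eqb_spec (gcdb b x y) k) => [->|h]; [by rewrite eqxx | by case: eqP].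
Qed.

Lemma sum_dvd_gcdb b j N : 0 < j ->
  \big[Rplus/0%R]_(x <- iota 1 N) \big[Rplus/0%R]_(y <- iota 1 N)
     (if j %| gcdb b x y then 1 else 0)%R = (INR (N %/ j) * INR (N %/ j ^ b))%R.
Proof.
move=> hj. rewrite -(sum_mult j N hj) big_distrl /=.
rewrite big_seq [in RHS]big_seq. apply: eq_bigr => x hx.
rewrite mem_iota in hx. have hx0 : 0 < x by lia.
rewrite -(sum_mult (j ^ b) N (_ : 0 < j ^ b)); last by rewrite expn_gt0 hj.
rewrite big_distrr /=. apply: eq_bigr => y _.
rewrite gcdb_dvd // /Pb. case: (j %| x); case: (j ^ b %| y) => /=; lra.
Qed.

Lemma pair_claim b k N x y : 0 < k -> 0 < x -> x <= N ->
  (if gcdb b x y == k then 1 else 0)%R =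
  \big[Rplus/0%R]_(d <- iota 1 N.+1) (mu d * (if k * d %| gcdb b x y then 1 else 0))%R.
Proof.
move=> hk hx hxN.
case: (gcdb_spec b x y hx) => hG0 hGx _ _.
set G := gcdb b x y in hG0 hGx *.
case: (boolP (k %| G)).
- move/dvdnP => [m eG].
  have hm : 0 < m by move: hG0; rewrite eG; nia.
  have hmN : m <= N.+1 by move: hGx; rewrite eG; nia.
  rewrite (eq_bigr (fun d => mu d * (if d %| m then 1 else 0))%R); last first.
    move=> d _. by rewrite eG mulnC dvdn_pmul2r.
  rewrite mobius_range // eG.
  have -> : (m * k == k) = (m == 1) by rewrite -{2}(mul1n k) eqn_pmul2r.
  done.
- move=> hkG. have -> : (G == k) = false.
    apply/eqP => e. move/negP: hkG; apply. by rewrite e.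
  rewrite big1 // => d _.
  have -> : (k * d %| G) = false.
    apply/negP => h. move/negP: hkG; apply. apply: dvdn_trans h. by apply: dvdn_mulr.
  lra.
Qed.

Lemma cnt_mobius b k N : 0 < k ->
  INR (cnt b k N) = \big[Rplus/0%R]_(d <- iota 1 N.+1)
     (mu d * (INR (N %/ (k * d)) * INR (N %/ (k * d) ^ b)))%R.
Proof.
move=> hk. rewrite cnt_sum.
have step1 : \big[Rplus/0%R]_(x <- iota 1 N) \big[Rplus/0%R]_(y <- iota 1 N)
     (if gcdb b x y == k then 1 else 0)%R =
  \big[Rplus/0%R]_(x <- iota 1 N) \big[Rplus/0%R]_(y <- iota 1 N)
  \big[Rplus/0%R]_(d <- iota 1 N.+1) (mu d * (if k * d %| gcdb b x y then 1 else 0))%R.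
  apply: eq_big_seq => x hx. rewrite mem_iota in hx.
  apply: eq_bigr => y _. apply: pair_claim; lia.
rewrite step1.
rewrite (eq_bigr (fun x => \big[Rplus/0%R]_(d <- iota 1 N.+1) \big[Rplus/0%R]_(y <- iota 1 N)
   (mu d * (if k * d %| gcdb b x y then 1 else 0))%R)); last first.
  move=> x _. by rewrite exchange_big.
rewrite exchange_big. apply: eq_big_seq => d hd. rewrite mem_iota in hd.
have hkd : 0 < k * d by rewrite muln_gt0 hk; lia.
rewrite -sum_dvd_gcdb // big_distrr /=. apply: eq_bigr => x _.
rewrite big_distrr /=. done.
Qed.

Lemma cnt_bound b k N : 0 < k ->
  (INR (cnt b k N) <= INR (N %/ k) * INR (N %/ k ^ b))%R.
Proof.
move=> hk. rewrite cnt_sum -sum_dvd_gcdb //.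
apply: rsum_le => x hx. rewrite mem_iota in hx. apply: rsum_le => y _.
case: ifP => [/eqP <-|_]; first by rewrite dvdnn; lra.
case: ifP => _; lra.
Qed.


Open Scope R_scope.

Lemma sum_n_minusR (u v : nat -> R) N :
  sum_n (fun n => u n - v n) N = sum_n u N - sum_n v N.
Proof.
elim: N => [|N IH]; first by rewrite !sum_O.
rewrite !sum_Sn IH /plus /=; ring.
Qed.

Lemma tail_bound (g G : nat -> R) K i :
  (forall n, Rabs (g n) <= G n) ->
  Rabs (sum_n g (K + i) - sum_n g K) <= sum_n G (K + i) - sum_n G K.
Proof.
move=> h. elim: i => [|i IH].
- rewrite addn0 !Rminus_diag Rabs_R0; lra.
- rewrite addnS !sum_Sn /plus /=.
  have := h (S (K + i)).
  have := Rabs_triang (sum_n g (K + i) - sum_n g K) (g (S (K + i))).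
  have -> : sum_n g (K + i) + g (S (K + i)) - sum_n g K =
            sum_n g (K + i) - sum_n g K + g (S (K + i)) by ring.
  lra.
Qed.

Lemma sum_n_mono (M : nat -> R) N i : (forall n, 0 <= M n) ->
  sum_n M N <= sum_n M (N + i).
Proof.
move=> h. elim: i => [|i IH]; first by rewrite addn0; lra.
rewrite addnS sum_Sn /plus /=. have := h (S (N + i)). lra.
Qed.

Lemma sum_n_le_Series (M : nat -> R) N : (forall n, 0 <= M n) -> ex_series M ->
  sum_n M N <= Series M.
Proof.
move=> h hex.
have hl : is_lim_seq (sum_n M) (Series M) by apply: (Series_correct _ hex).
have : Rbar_le (sum_n M N) (Series M).
  apply: (is_lim_seq_le_loc (fun _ => sum_n M N) (sum_n M)) => //.
  + exists N => m hm. have -> : m = (N + (m - N))%nat by lia. by apply: sum_n_mono.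
  + by apply: is_lim_seq_const.
by [].
Qed.

Lemma lim_sum_fin (u : nat -> nat -> R) (l : nat -> R) :
  (forall n, is_lim_seq (fun N => u N n) (l n)) ->
  forall K, is_lim_seq (fun N => sum_n (u N) K) (sum_n l K).
Proof.
move=> h. elim => [|K IH].
- rewrite sum_O. apply: is_lim_seq_ext (h 0%nat) => N. by rewrite sum_O.
- rewrite sum_Sn. apply: (is_lim_seq_ext (fun N => sum_n (u N) K + u N (S K))).
  + move=> N. by rewrite sum_Sn.
  + by apply: is_lim_seq_plus'.
Qed.

Lemma abs_split (x y : R) : Rabs x <= Rabs y + Rabs (x - y).
Proof. have := Rabs_triang y (x - y). have -> : y + (x - y) = x by ring. done. Qed.

Lemma tannery (a : nat -> nat -> R) (f M : nat -> R) :
  (forall n, is_lim_seq (fun N => a N n) (f n)) ->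
  (forall N n, Rabs (a N n) <= M n) -> ex_series M ->
  ex_series f /\ is_lim_seq (fun N => sum_n (a N) N) (Series f).
Proof.
move=> hlim hb hM.
have hM0 : forall n, 0 <= M n by move=> n; have := hb O n; have := Rabs_pos (a O n); lra.
have hf : forall n, Rabs (f n) <= M n.
  move=> n. have := is_lim_seq_le (fun N => Rabs (a N n)) (fun _ => M n) (Rabs (f n)) (M n).
  move=> H. apply: H => //.
  - by apply: (is_lim_seq_abs _ (f n)).
  - by apply: is_lim_seq_const.
have hexf : ex_series f by apply: (ex_series_le f M) => // n; apply: hf.
split=> //.
have hlf : is_lim_seq (sum_n f) (Series f) by apply: (Series_correct _ hexf).
have hlM : is_lim_seq (sum_n M) (Series M) by apply: (Series_correct _ hM).
suff hd : is_lim_seq (fun N => sum_n (a N) N - sum_n f N) 0.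
  apply: (is_lim_seq_ext (fun N => (sum_n (a N) N - sum_n f N) + sum_n f N)).
    move=> N; ring.
  have -> : Series f = 0 + Series f by ring.
  by apply: is_lim_seq_plus'.
apply/is_lim_seq_spec => eps.
move/is_lim_seq_spec: hlM => hlM.
have [K hK] := hlM (pos_div_2 (pos_div_2 eps)).
have hK' := hK K (le_n K). simpl in hK'.
have hfin := lim_sum_fin (fun N n => a N n - f n) (fun _ => 0) _ K.
have hfin' : is_lim_seq (fun N => sum_n (fun n => a N n - f n) K) 0.
  have e0 : forall K', sum_n (fun _ : nat => 0) K' = 0.
    elim => [|K' IH]; [by rewrite sum_O | by rewrite sum_Sn IH /plus /=; ring].
  rewrite -(e0 K). apply: hfin => n.
  have -> : 0 = f n - f n by ring.
  apply: is_lim_seq_minus' => //. by apply: is_lim_seq_const.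
move/is_lim_seq_spec: hfin' => hfin'.
have [N1 hN1] := hfin' (pos_div_2 eps).
exists (max N1 K) => N hN.
have hSM := sum_n_le_Series M N hM0 hM.
have hKN : N = (K + (N - K))%nat by lia.
have htail := tail_bound (fun n => a N n - f n) (fun n => 2 * M n) K (N - K).
have htail' : forall n, Rabs (a N n - f n) <= 2 * M n.
  move=> n. have := Rabs_triang (a N n) (- f n). rewrite Rabs_Ropp /Rminus.
  have := hb N n; have := hf n. lra.
move: (htail htail'). rewrite -hKN.
have e2 : forall N', sum_n (fun n => 2 * M n) N' = 2 * sum_n M N'.
  move=> N'. elim: N' => [|N' IH]; first by rewrite !sum_O.
  rewrite !sum_Sn IH /plus /=; ring.
rewrite !e2 => ht.
have h1 := hN1 N (Nat.le_trans _ _ _ (Nat.le_max_l _ _) hN).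
rewrite Rminus_0_r in h1.
rewrite Rminus_0_r -sum_n_minusR.
have hsp := abs_split (sum_n (fun n => a N n - f n) N) (sum_n (fun n => a N n - f n) K).
move: hK'. rewrite /=. move=> hK'.
have := Rabs_def2 _ _ hK'. move=> [? ?]. simpl in h1. lra.
Qed.


Lemma Ceq (x y : C) : Re x = Re y -> Im x = Im y -> x = y.
Proof. case: x => a b; case: y => c d /= -> -> //. Qed.

Lemma C_lim_join {T} {F : (T -> Prop) -> Prop} {FF : Filter F} (u : T -> C) (z : C) :
  filterlim (fun t => Re (u t)) F (locally (Re z)) ->
  filterlim (fun t => Im (u t)) F (locally (Im z)) ->
  filterlim u F (locally z).
Proof.
move=> /filterlim_locally h1 /filterlim_locally h2.
apply/filterlim_locally => eps.
apply: filter_imp (filter_and _ _ (h1 eps) (h2 eps)) => t [a b].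
by split.
Qed.

Lemma C_lim_Re {T} {F : (T -> Prop) -> Prop} {FF : Filter F} (u : T -> C) (z : C) :
  filterlim u F (locally z) -> filterlim (fun t => Re (u t)) F (locally (Re z)).
Proof.
move=> /filterlim_locally h. apply/filterlim_locally => eps.
by apply: filter_imp (h eps) => t [a b].
Qed.

Lemma C_lim_Im {T} {F : (T -> Prop) -> Prop} {FF : Filter F} (u : T -> C) (z : C) :
  filterlim u F (locally z) -> filterlim (fun t => Im (u t)) F (locally (Im z)).
Proof.
move=> /filterlim_locally h. apply/filterlim_locally => eps.
by apply: filter_imp (h eps) => t [a b].
Qed.

Lemma Re_sum_n (a : nat -> C) N : Re (sum_n a N) = sum_n (fun n => Re (a n)) N.
Proof.
elim: N => [|N IH]; first by rewrite !sum_O.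
by rewrite !sum_Sn -IH.
Qed.

Lemma Im_sum_n (a : nat -> C) N : Im (sum_n a N) = sum_n (fun n => Im (a n)) N.
Proof.
elim: N => [|N IH]; first by rewrite !sum_O.
by rewrite !sum_Sn -IH.
Qed.

Lemma im_le_Cmod' (c : C) : Rabs (Im c) <= Cmod c.
Proof.
case: c => x y. rewrite /Cmod /=.
rewrite -sqrt_Rsqr_abs. apply: sqrt_le_1_alt. rewrite /Rsqr. nra.
Qed.

Lemma tannery_C (a : nat -> nat -> C) (f : nat -> C) (M : nat -> R) :
  (forall n, filterlim (fun N => a N n) eventually (locally (f n))) ->
  (forall N n, Cmod (a N n) <= M n) -> ex_series M ->
  exists z : C, is_series f z /\ filterlim (fun N => sum_n (a N) N) eventually (locally z).
Proof.
move=> hl hb hM.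
have [er hr] := tannery (fun N n => Re (a N n)) (fun n => Re (f n)) M
  (fun n => C_lim_Re _ _ (hl n)) (fun N n => Rle_trans _ _ _ (re_le_Cmod _) (hb N n)) hM.
have [ei hi] := tannery (fun N n => Im (a N n)) (fun n => Im (f n)) M
  (fun n => C_lim_Im _ _ (hl n)) (fun N n => Rle_trans _ _ _ (im_le_Cmod' _) (hb N n)) hM.
exists (Series (fun n => Re (f n)), Series (fun n => Im (f n))). split.
- apply: C_lim_join.
  + apply: (filterlim_ext (sum_n (fun n => Re (f n)))).
      move=> N. by rewrite Re_sum_n.
    exact: (Series_correct _ er).
  + apply: (filterlim_ext (sum_n (fun n => Im (f n)))).
      move=> N. by rewrite Im_sum_n.
    exact: (Series_correct _ ei).
- apply: C_lim_join.
  + apply: filterlim_ext hr => N. by rewrite Re_sum_n.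
  + apply: filterlim_ext hi => N. by rewrite Im_sum_n.
Qed.


Lemma iota_sum_n (F : nat -> R) N :
  \big[Rplus/0]_(d <- iota 1 N.+1) F d = sum_n (fun n => F (S n)) N.
Proof.
elim: N => [|N IH]; first by rewrite big_seq1 sum_O.
rewrite (_ : iota 1 N.+2 = iota 1 N.+1 ++ [:: N.+2]); last by rewrite -(addn1 N.+1) iotaD add1n addn1.
by rewrite big_cat big_seq1 IH sum_Sn.
Qed.

Lemma div_le_inv a x y : 0 < x -> 0 < y -> a * y <= x -> a / x <= / y.
Proof.
move=> hx hy h.
have e1 : a / x = (a * y) * (/ x * / y) by field; lra.
have e2 : / y = x * (/ x * / y) by field; lra.
rewrite e1 [X in _ <= X]e2. apply: Rmult_le_compat_r => //.
apply: Rmult_le_pos; left; by apply: Rinv_0_lt_compat.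
Qed.

Lemma inv_sub_le a x y : 0 < x -> 0 < y -> x <= a * y + y -> / y - / x <= a / x.
Proof.
move=> hx hy h.
have e1 : a / x = (a * y) * (/ x * / y) by field; lra.
have e2 : / y - / x = (x - y) * (/ x * / y) by field; lra.
rewrite e2 e1. apply: Rmult_le_compat_r; last lra.
apply: Rmult_le_pos; left; by apply: Rinv_0_lt_compat.
Qed.

Lemma lim_inv_INR : is_lim_seq (fun N => / INR N) 0.
Proof.
have := is_lim_seq_inv INR p_infty is_lim_seq_INR. by apply.
Qed.

Lemma lim_div j : (0 < j)%N -> is_lim_seq (fun N => INR (N %/ j) / INR N) (/ INR j).
Proof.
move=> hj.
have hj' : 0 < INR j by apply: lt_0_INR; apply/ltP.
apply: (is_lim_seq_le_le_loc (fun N => / INR j - / INR N) _ (fun _ => / INR j)).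
- exists 1%nat => N hN.
  have hN' : 0 < INR N by apply: lt_0_INR; lia.
  have h1 : (N %/ j * j <= N)%N by apply: leq_trunc_div.
  have h2 : (N <= N %/ j * j + j)%N.
    have := divn_eq N j. have := ltn_pmod N hj. lia.
  split.
  + apply: inv_sub_le => //. rewrite -mult_INR -plus_INR. apply: le_INR. by apply/leP.
  + apply: div_le_inv => //. rewrite -mult_INR. apply: le_INR. by apply/leP.
- have H := is_lim_seq_minus' (fun _ => / INR j) (fun N => / INR N) _ _ (is_lim_seq_const _) lim_inv_INR.
  rewrite Rminus_0_r in H. exact H.
- by apply: is_lim_seq_const.
Qed.

Lemma INR_expn j b : INR (expn j b) = INR j ^ b.
Proof. by rewrite -powE pow_INR. Qed.

Lemma lim_DN b j : (0 < j)%N ->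
  is_lim_seq (fun N => INR (N %/ j) * INR (N %/ expn j b) / INR N ^ 2) (/ INR j ^ (b + 1)).
Proof.
move=> hj.
have hj' : 0 < INR j by apply: lt_0_INR; apply/ltP.
have hjb : (0 < expn j b)%N by rewrite expn_gt0 hj.
apply: (is_lim_seq_ext_loc (fun N => (INR (N %/ j) / INR N) * (INR (N %/ expn j b) / INR N))).
- exists 1%nat => N hN. have hN' : 0 < INR N by apply: lt_0_INR; lia. field. lra.
- have -> : / INR j ^ (b + 1) = / INR j * / INR (expn j b).
    rewrite INR_expn pow_add /=. field. split; [apply: pow_nonzero|]; lra.
  apply: is_lim_seq_mult'; by apply: lim_div.
Qed.

Lemma bound_DN b j N : (0 < j)%N -> (1 <= b)%N ->
  0 <= INR (N %/ j) * INR (N %/ expn j b) / INR N ^ 2 <= / INR j ^ 2.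
Proof.
move=> hj hb.
have hj' : 0 < INR j by apply: lt_0_INR; apply/ltP.
case: N => [|N].
- rewrite !div0n. have -> : INR 0 = 0 by []. rewrite Rmult_0_l /Rdiv Rmult_0_l. split; first lra. left. apply: Rinv_0_lt_compat. nra.
- have hN' : 0 < INR N.+1 by apply: lt_0_INR; lia.
  have h1 : (N.+1 %/ j * j <= N.+1)%N by apply: leq_trunc_div.
  have h2 : (N.+1 %/ expn j b * expn j b <= N.+1)%N by apply: leq_trunc_div.
  have h3 : (j <= expn j b)%N.
    rewrite -{1}(expn1 j). apply: leq_pexp2l => //.
  have h4 : (N.+1 %/ j * (N.+1 %/ expn j b) * (j * j) <= N.+1 * N.+1)%N.
    have h5 : (N.+1 %/ expn j b * j <= N.+1)%N.
      apply: leq_trans h2. by apply: leq_mul.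
    have := leq_mul h1 h5. rewrite -!mulnA. rewrite (mulnCA j). done.
  split.
  + apply: Rmult_le_pos; first by apply: Rmult_le_pos; apply: pos_INR.
    left; apply: Rinv_0_lt_compat. nra.
  + apply: div_le_inv; try nra.
    have := le_INR _ _ (elimT leP h4). rewrite !mult_INR /=. lra.
Qed.

Lemma plusR (x y : R) : plus x y = x + y. Proof. by []. Qed.

Lemma ex_series_inv2 : ex_series (fun n => / INR (S n) ^ 2).
Proof.
set g := fun n => 2 * / (INR (S n) * INR (S (S n))).
have lim2 : is_lim_seq (fun N => 2 * / INR (S (S N))) 0.
  have h := lim_inv_INR. move/is_lim_seq_incr_1: h => h. move/is_lim_seq_incr_1: h => h.
  have H := is_lim_seq_mult' (fun _ => 2) _ 2 0 (is_lim_seq_const 2) h.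
  rewrite Rmult_0_r in H. exact H.
have hg : is_series g 2.
  rewrite /is_series.
  apply: (filterlim_ext (fun N => 2 - 2 * / INR (S (S N)))).
  - elim => [|N IH]; first by rewrite sum_O /g /=; field.
    rewrite sum_Sn -IH plusR /g.
    rewrite !S_INR. field. split; have := pos_INR N; lra.
  - have H := is_lim_seq_minus' (fun _ => 2) _ 2 0 (is_lim_seq_const 2) lim2.
    rewrite Rminus_0_r in H. exact H.
apply: (ex_series_le _ g); last by exists 2.
move=> n. change (Rabs (/ INR (S n) ^ 2) <= g n). rewrite /g.
have hx : 1 <= INR (S n) by rewrite S_INR; have := pos_INR n; lra.
rewrite Rabs_pos_eq; last by left; apply: Rinv_0_lt_compat; apply: pow_lt; lra.
rewrite (S_INR (S n)).
set x := INR (S n) in hx *.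
have e : 2 * / (x * (x + 1)) - / x ^ 2 = (x - 1) * / (x ^ 2 * (x + 1)) by field; lra.
have : 0 <= (x - 1) * / (x ^ 2 * (x + 1)).
  apply: Rmult_le_pos; first lra. left; apply: Rinv_0_lt_compat. nra.
lra.
Qed.


Lemma sum_n_Rmult_r (u : nat -> R) c N : sum_n (fun n => u n * c) N = sum_n u N * c.
Proof. exact: (sum_n_mult_r c u N). Qed.

Definition Cmu b := Series (fun n => mu (S n) / INR (S n) ^ (b + 1)).

Lemma INR_pos_S n : 0 < INR (S n).
Proof. apply: lt_0_INR; lia. Qed.

Lemma cnt_lim b k : (0 < k)%N -> (1 <= b)%N ->
  is_lim_seq (fun N => INR (cnt b k N) / INR N ^ 2) (Cmu b * / INR k ^ (b + 1)).
Proof.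
move=> hk hb.
have hk' : 0 < INR k by apply: lt_0_INR; apply/ltP.
have hkn : forall n, (0 < k * S n)%N by move=> n; rewrite muln_gt0 hk.
have hlim : forall n, is_lim_seq (fun N => mu (S n) * (INR (N %/ (k * S n)) * INR (N %/ expn (k * S n) b)) / INR N ^ 2) (mu (S n) * / INR (k * S n) ^ (b + 1)).
  move=> n. have := lim_DN b (k * S n) (hkn n) => h.
  have H := is_lim_seq_mult' (fun _ => mu (S n)) _ _ _ (is_lim_seq_const _) h.
  apply: is_lim_seq_ext H => N. rewrite /Rdiv; ring.
have hbd : forall N n, Rabs (mu (S n) * (INR (N %/ (k * S n)) * INR (N %/ expn (k * S n) b)) / INR N ^ 2) <= / INR (S n) ^ 2.
  move=> N n. have [h1 h2] := bound_DN b (k * S n) N (hkn n) hb.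
  have hm := mu_bound (S n).
  rewrite /Rdiv Rmult_assoc Rabs_mult (Rabs_pos_eq (_ * _ * _)); last exact h1.
  have h3 : / INR (k * S n) ^ 2 <= / INR (S n) ^ 2.
    apply: Rinv_le_contravar. have := INR_pos_S n; nra.
    apply: pow_incr. split; first by have := INR_pos_S n; lra.
    rewrite mult_INR. have := INR_pos_S n. have : 1 <= INR k.
      have -> : 1 = INR 1 by []. apply: le_INR. lia.
    nra.
  have := Rabs_pos (mu (S n)). nra.
have [hex hl] := tannery _ _ _ hlim hbd ex_series_inv2.
apply: (is_lim_seq_ext (fun N => sum_n (fun n => mu (S n) * (INR (N %/ (k * S n)) *
     INR (N %/ expn (k * S n) b)) / INR N ^ 2) N)).
+ move=> N. by rewrite /Rdiv sum_n_Rmult_r cnt_mobius // iota_sum_n.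
+ have -> : Cmu b * / INR k ^ (b + 1) = Series (fun n => mu (S n) * / INR (k * S n) ^ (b + 1)).
    rewrite /Cmu -Series_scal_r. apply: Series_ext => n.
    rewrite mult_INR Rpow_mult_distr. have := INR_pos_S n => hn. field.
    split; apply: pow_nonzero; lra.
  exact: hl.
Qed.


Lemma Cplus0r (c : C) : Cplus c (RtoC 0) = c.
Proof. case: c => a b; apply: Ceq => /=; ring. Qed.
Lemma Cplus0l (c : C) : Cplus (RtoC 0) c = c.
Proof. case: c => a b; apply: Ceq => /=; ring. Qed.

Lemma ind_out (c : C) (m K : nat) : (m = 0%nat \/ (K + 1 < m)%coq_nat) ->
  sum_n (fun n => if Nat.eqb m (S n) then c else RtoC 0) K = RtoC 0.
Proof.
move=> h. elim: K h => [|K IH] h.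
- rewrite sum_O. case: (Nat.eqb_spec m 1) => //; lia.
- rewrite sum_Sn IH; last lia.
  case: (Nat.eqb_spec m (S (S K))) => e; first lia.
  exact: Cplus0r.
Qed.

Lemma ind_in (c : C) (m K : nat) : (1 <= m <= K + 1)%N ->
  sum_n (fun n => if Nat.eqb m (S n) then c else RtoC 0) K = c.
Proof.
elim: K => [|K IH] h.
- rewrite sum_O. case: (Nat.eqb_spec m 1) => //; lia.
- rewrite sum_Sn. case: (Nat.eqb_spec m (S (S K))) => e.
  + rewrite ind_out; last lia. exact: Cplus0l.
  + rewrite IH; last lia. exact: Cplus0r.
Qed.

Lemma sum_n_zeroC K : sum_n (fun _ => RtoC 0) K = RtoC 0.
Proof.
elim: K => [|K IH]; first by rewrite sum_O.
rewrite sum_Sn IH. exact: Cplus0r.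
Qed.

Lemma sumC_decomp (L : nat -> nat -> C) (g : nat * nat -> nat) l K :
  (forall p, List.In p l -> (1 <= g p <= K + 1)%N) ->
  sumC L l = sum_n (fun n => sumC L (List.filter (fun p => Nat.eqb (g p) (S n)) l)) K.
Proof.
elim: l => [|x l IH] h.
- by rewrite sum_n_zeroC.
- rewrite (sum_n_ext _ (fun n => plus (if Nat.eqb (g x) (S n) then L (fst x) (snd x) else RtoC 0)
     (sumC L (List.filter (fun p => Nat.eqb (g p) (S n)) l)))); last first.
    move=> n /=. case: (Nat.eqb (g x) (S n)) => //. by rewrite /plus /= Cplus0l.
  rewrite sum_n_plus ind_in; last by apply: h; left.
  rewrite -IH //. move=> p hp; apply: h; by right.
Qed.

Lemma TN_in N p : List.In p (TN N) -> (1 <= fst p <= N)%N /\ (1 <= snd p <= N)%N.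
Proof.
case: p => x y. rewrite /TN in_prod_iff !in_seq /=. lia.
Qed.

Lemma gcdb_range b N p : List.In p (TN N) -> (1 <= gcdb b (fst p) (snd p) <= N + 1)%N.
Proof.
move=> /TN_in [h1 h2].
have hx : (0 < fst p)%N by apply/ltP; lia.
case: (gcdb_spec b (fst p) (snd p) hx) => hg hgx _ _. lia.
Qed.

Lemma mean_decomp b (L : nat -> nat -> C) N :
  mean_N L N = sum_n (fun n => Cdiv (sumC L (TNbk N b (S n))) (RtoC (INR N ^ 2))) N.
Proof.
rewrite /mean_N (sumC_decomp L (fun p => gcdb b (fst p) (snd p)) (TN N) N); last first.
  move=> p hp. exact: gcdb_range.
rewrite /Cdiv. symmetry. exact: (sum_n_mult_r _ (fun n => sumC L (TNbk N b (S n))) N).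
Qed.

Lemma sumC_one (l : list (nat * nat)) : sumC (fun _ _ => RtoC 1) l = RtoC (INR (length l)).
Proof.
elim: l => [|x l IH] //.
change (Cplus (RtoC 1) (sumC (fun _ _ => RtoC 1) l) = RtoC (INR (S (length l)))).
rewrite IH S_INR. apply: Ceq => /=; ring.
Qed.

Lemma cnt_total b N : sum_n (fun n => INR (cnt b (S n) N)) N = INR N * INR N.
Proof.
have := sumC_decomp (fun _ _ => RtoC 1) (fun p => gcdb b (fst p) (snd p)) (TN N) N.
move=> /(_ (fun p hp => gcdb_range b N p hp)).
rewrite sumC_one => e.
have := f_equal Re e. rewrite Re_sum_n /= => e2.
rewrite /cnt /TNbk. rewrite (sum_n_ext _ (fun n => Re (sumC (fun _ _ => RtoC 1)
    (List.filter (fun p => Nat.eqb (gcdb b (fst p) (snd p)) (S n)) (TN N))))); last first.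
  move=> n. by rewrite sumC_one.
rewrite -e2 /TN length_prod length_seq mult_INR. done.
Qed.


Lemma inv_nonneg x : 0 <= x -> 0 <= / x.
Proof.
move=> h. case: (Req_dec x 0) => [->|hx]; first by rewrite Rinv_0; lra.
left. apply: Rinv_0_lt_compat. lra.
Qed.

Lemma cnt_ratio_bound b k N : (0 < k)%N -> (1 <= b)%N ->
  0 <= INR (cnt b k N) / INR N ^ 2 <= / INR k ^ 2.
Proof.
move=> hk hb.
have h1 := cnt_bound b k N hk.
have [h2 h3] := bound_DN b k N hk hb.
have h4 : 0 <= / INR N ^ 2 by apply: inv_nonneg; apply: pow2_ge_0.
split.
- apply: Rmult_le_pos => //. exact: pos_INR.
- apply: Rle_trans h3. apply: Rmult_le_compat_r => //.
Qed.

Lemma Cst_zeta b : (1 <= b)%N -> Cmu b * zeta_nat (b + 1)%nat = 1.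
Proof.
move=> hb.
have hlim : forall n, is_lim_seq (fun N => INR (cnt b (S n) N) / INR N ^ 2) (Cmu b * / INR (S n) ^ (b + 1)).
  move=> n. by apply: cnt_lim.
have hbd : forall N n, Rabs (INR (cnt b (S n) N) / INR N ^ 2) <= / INR (S n) ^ 2.
  move=> N n. have [h1 h2] := cnt_ratio_bound b (S n) N (ltn0Sn n) hb.
  by rewrite Rabs_pos_eq.
have [hex hl] := tannery _ _ _ hlim hbd ex_series_inv2.
have h1 : is_lim_seq (fun _ => 1) (Series (fun n => Cmu b * / INR (S n) ^ (b + 1))).
  apply: (is_lim_seq_ext_loc _ _ _ _ hl). exists 1%nat => N hN.
  rewrite /Rdiv sum_n_Rmult_r cnt_total.
  have : 0 < INR N by apply: lt_0_INR; lia.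
  move=> h. field. lra.
have h2 := is_lim_seq_unique _ _ h1.
rewrite Lim_seq_const in h2. case: h2 => h2.
by rewrite /zeta_nat -Series_scal_l -h2.
Qed.


Lemma sumC_bound (L : nat -> nat -> C) B l :
  (forall r s, Cmod (L r s) <= B) -> Cmod (sumC L l) <= B * INR (length l).
Proof.
move=> hB. elim: l => [|x l IH].
- rewrite /= Cmod_0. lra.
- change (Cmod (Cplus (L (fst x) (snd x)) (sumC L l)) <= B * INR (S (length l))).
  rewrite S_INR. have := Cmod_triangle (L (fst x) (snd x)) (sumC L l).
  have := hB (fst x) (snd x). lra.
Qed.

Lemma RtoC_neq0 (x : R) : x <> 0 -> RtoC x <> RtoC 0.
Proof. move=> h e. apply: h. by case: e. Qed.

Lemma Cmod_div_R (s : C) (d : R) : 0 < d -> Cmod (Cdiv s (RtoC d)) = Cmod s / d.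
Proof.
move=> hd. rewrite /Cdiv Cmod_mult Cmod_inv; last by apply: RtoC_neq0; lra.
rewrite Cmod_R Rabs_pos_eq; last lra. done.
Qed.

Lemma term_factor (L : nat -> nat -> C) (l : list (nat * nat)) (d : R) : 0 < d ->
  Cdiv (sumC L l) (RtoC d) =
  Cmult (RtoC (INR (length l) / d)) (Cdiv (sumC L l) (RtoC (INR (length l)))).
Proof.
move=> hd. case: l => [|x l].
- rewrite /=. apply: Ceq => /=; rewrite /Rdiv; ring.
- have hn : 0 < INR (length (x :: l)) by apply: lt_0_INR => /=; lia.
  move: (sumC L (x :: l)) => s. move: (INR (length (x :: l))) hn => n hn.
  case: s => s1 s2. apply: Ceq => /=; field; lra.
Qed.

Lemma prod_lim (r : nat -> R) (rl : R) (w : nat -> C) (wl : C) :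
  is_lim_seq r rl -> filterlim w eventually (locally wl) ->
  filterlim (fun N => Cmult (RtoC (r N)) (w N)) eventually (locally (Cmult (RtoC rl) wl)).
Proof.
move=> hr hw.
have hre : filterlim (fun t => Re (w t)) eventually (locally (Re wl)) by apply: C_lim_Re.
have him : filterlim (fun t => Im (w t)) eventually (locally (Im wl)) by apply: C_lim_Im.
apply: C_lim_join.
- apply: (filterlim_ext (fun N => r N * Re (w N))).
    move=> N. case: (w N) => a c /=. ring.
  have -> : Re (Cmult (RtoC rl) wl) = rl * Re wl by case: wl {hw hre him} => a c /=; ring.
  have H := is_lim_seq_mult' _ _ _ _ hr (hre : is_lim_seq (fun t => Re (w t)) (Re wl)). exact H.
- apply: (filterlim_ext (fun N => r N * Im (w N))).
    move=> N. case: (w N) => a c /=. ring.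
  have -> : Im (Cmult (RtoC rl) wl) = rl * Im wl by case: wl {hw hre him} => a c /=; ring.
  have H := is_lim_seq_mult' _ _ _ _ hr (him : is_lim_seq (fun t => Im (w t)) (Im wl)). exact H.
Qed.


Lemma main_aux (b : nat) (L : nat -> nat -> C) (Mk : nat -> C) :
  Peano.le 1 b ->
  (exists B : R, forall r s : nat, Cmod (L r s) <= B) ->
  (forall k : nat, Peano.le 1 k ->
     filterlim (fun N => avg_bk L b k N) eventually (locally (Mk k))) ->
  exists z : C,
    is_series (fun n => Cdiv (Mk (S n)) (RtoC (INR (S n) ^ (Nat.add b 1)))) z /\
    exists m : C,
      filterlim (fun N => mean_N L N) eventually (locally m) /\
      m = Cdiv z (RtoC (zeta_nat (Nat.add b 1))).
Proof.
move=> hb1 [B hB] hlim.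
change (Nat.add b 1) with (addn b 1).
have hb : (1 <= b)%N by apply/leP.
have hB0 : 0 <= B by have := hB 0%nat 0%nat; have := Cmod_ge_0 (L 0%nat 0%nat); lra.
have hz := Cst_zeta b hb.
set c := Cmu b in hz *.
set Z := zeta_nat (b + 1) in hz *.
have hc : c <> 0 by move=> e; rewrite e in hz; lra.
have hZ : Z = / c by apply: (Rmult_eq_reg_l c); [rewrite hz; field | ].
set a := fun N n => Cdiv (sumC L (TNbk N b (S n))) (RtoC (INR N ^ 2)).
set f := fun n => Cmult (RtoC (c * / INR (S n) ^ (b + 1))) (Mk (S n)).
have hlimC : forall n, filterlim (fun N => a N n) eventually (locally (f n)).
  move=> n.
  apply: (filterlim_ext_loc (fun N => Cmult (RtoC (INR (cnt b (S n) N) / INR N ^ 2)) (avg_bk L b (S n) N))).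
    exists 1%nat => N hN. rewrite /a /avg_bk /cnt. symmetry. apply: term_factor.
    apply: pow_lt. apply: lt_0_INR. lia.
  apply: prod_lim. by apply: cnt_lim.
  apply: hlim. lia.
have hbd : forall N n, Cmod (a N n) <= B * / INR (S n) ^ 2.
  move=> N n. have [h1 h2] := cnt_ratio_bound b (S n) N (ltn0Sn n) hb.
  case: N h1 h2 => [|N] h1 h2.
  - rewrite /a /=. rewrite /Cdiv Cmod_mult Cmod_0 Rmult_0_l.
    apply: Rmult_le_pos => //. apply: inv_nonneg. apply: pow2_ge_0.
  - have hd : 0 < INR (S N) ^ 2 by apply: pow_lt; apply: lt_0_INR; lia.
    rewrite /a Cmod_div_R //.
    have := sumC_bound L B (TNbk (S N) b (S n)) hB. rewrite -/(cnt b (S n) (S N)) => hs.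
    have : Cmod (sumC L (TNbk (S N) b (S n))) / INR (S N) ^ 2 <= B * (INR (cnt b (S n) (S N)) / INR (S N) ^ 2).
      rewrite /Rdiv -Rmult_assoc. apply: Rmult_le_compat_r => //. left. by apply: Rinv_0_lt_compat.
    move=> h3. apply: (Rle_trans _ _ _ h3). by apply: Rmult_le_compat_l.
have hexM : ex_series (fun n => B * / INR (S n) ^ 2).
  exact: (ex_series_scal_l B _ ex_series_inv2).
have [z0 [hz0 hm0]] := tannery_C a f _ hlimC hbd hexM.
exists (Cmult (Cinv (RtoC c)) z0). split.
- have H := is_series_scal_l (Cinv (RtoC c)) _ _ hz0.
  apply: is_series_ext H => n. rewrite /f /scal /=.
  have hn : 0 < INR (S n) ^ (b + 1) by apply: pow_lt; apply: INR_pos_S.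
  move: hn. move: (INR (S n) ^ (b + 1)) => x hn.
  case: (Mk (S n)) => m1 m2. rewrite /Cdiv.
  apply: Ceq => /=; field; lra.
- exists z0. split.
  + apply: filterlim_ext hm0 => N. by rewrite (mean_decomp b).
  + rewrite hZ. case: z0 {hz0 hm0} => z1 z2. rewrite /Cdiv.
    apply: Ceq => /=; field; lra.
Qed.


End Aux.

Open Scope R_scope.

Theorem mainTheorem6 (b : nat) (L : nat -> nat -> C) (Mk : nat -> C) :
  (1 <= b)%nat ->
  (exists B : R, forall r s : nat, Cmod (L r s) <= B) ->
  (forall k : nat, (1 <= k)%nat ->
     filterlim (fun N => avg_bk L b k N) eventually (locally (Mk k))) ->
  exists z : C,
    is_series (fun n => Cdiv (Mk (S n)) (RtoC (INR (S n) ^ (b + 1)))) z /\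
    exists m : C,
      filterlim (fun N => mean_N L N) eventually (locally m) /\
      m = Cdiv z (RtoC (zeta_nat (b + 1))).
Proof.
  exact (Aux.main_aux b L Mk).
Qed.
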